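(* Let $n\ge 2$ and consider Tower of Hanoi on three pegs with $n$ disks, starting from the initial position (all $n$ disks on Peg 1). For every position $P$ of the $n$ disks on the three pegs, there is a finite sequence of legal moves of odd length, in which no two consecutive moves move the same disk, that transforms the initial position into $P$. Equivalently, in the two-player setting described in the context (players alternating, a player may not move the disk just moved by the opponent), the first player can force play to reach any position $P$ after an odd number of moves.
   Context: Tower of Hanoi on three pegs (labeled 1, 2, 3) with $n$ disks of pairwise distinct sizes: a position is an assignment of each disk to a peg, the disks on each peg being stacked with sizes decreasing from bottom to top. A legal move transfers the top disk of one peg to a different peg that is empty or whose top disk is larger. Here, sequences of legal moves are considered without any restriction on intermediate positions (in particular, intermediate positions may have all disks on one peg), except that no disk may be moved in two consecutive moves. *)

(* Defs.v *)
From mathcomp Require Import all_boot.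
Set Implicit Arguments. Unset Strict Implicit. Unset Printing Implicit Defensive.

(* Disks are 'I_n, disk i having size i (so smaller index = smaller disk).
   Pegs are 'I_3: peg 1 = ord 0, peg 2 = ord 1, peg 3 = ord 2.
   A position assigns each disk to a peg; the stacking order on each peg is
   forced (sizes decreasing from bottom to top). *)
Definition position (n : nat) := {ffun 'I_n -> 'I_3}.

Definition init_pos (n : nat) : position n := [ffun _ => (ord0 : 'I_3)].

(* Moving disk d to peg q is legal in position P iff d is the top disk of
   its peg (no smaller disk on the same peg), q is a different peg, and q is
   empty or its top disk is larger than d (no smaller disk on q). *)
Definition legal_move n (P : position n) (d : 'I_n) (q : 'I_3) : bool :=
  (P d != q) && [forall e : 'I_n, (e < d) ==> ((P e != P d) && (P e != q))].

Definition do_move n (P : position n) (d : 'I_n) (q : 'I_3) : position n :=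
  [ffun e => if e == d then q else P e].

(* A move is a pair (disk moved, destination peg). [valid_seq P last ms]:
   ms is a sequence of legal moves from P in which no disk is moved in two
   consecutive moves ([last] is the disk moved just before, if any). *)
Fixpoint valid_seq n (P : position n) (last : option 'I_n)
    (ms : seq ('I_n * 'I_3)) : bool :=
  match ms with
  | [::] => true
  | (d, q) :: ms' =>
      [&& legal_move P d q, last != Some d & valid_seq (do_move P d q) (Some d) ms']
  end.

Definition run_moves n (P : position n) (ms : seq ('I_n * 'I_3)) : position n :=
  foldl (fun R m => do_move R m.1 m.2) P ms.

(* Main.v *)
Require Import Defs.
From mathcomp Require Import all_boot.
Set Implicit Arguments. Unset Strict Implicit. Unset Printing Implicit Defensive.

Definition st2 := ('I_3 * 'I_3)%type.
Definition legal2 (s : st2) (b : bool) (q : 'I_3) : bool :=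
  if b then [&& s.2 != q, s.1 != s.2 & s.1 != q] else s.1 != q.
Definition step2 (s : st2) (b : bool) (q : 'I_3) : st2 :=
  if b then (s.1, q) else (q, s.2).
Fixpoint valid2 (s : st2) (lb : option bool) (ms : seq (bool * 'I_3)) : bool :=
  match ms with
  | [::] => true
  | (b, q) :: ms' => [&& legal2 s b q, lb != Some b & valid2 (step2 s b q) (Some b) ms']
  end.
Definition run2 (s : st2) (ms : seq (bool * 'I_3)) : st2 :=
  foldl (fun r m => step2 r m.1 m.2) s ms.

Definition o1 : 'I_3 := @Ordinal 3 1 isT.
Definition o2 : 'I_3 := @Ordinal 3 2 isT.
Definition on (k : nat) : 'I_3 := match k with 0 => ord0 | 1 => o1 | _ => o2 end.
Definition allo := [:: ord0; o1; o2].
Lemma allo_mem (x : 'I_3) : x \in allo.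
Proof. by case: x => [[|[|[|m]]] Hm]. Qed.
Definition soln (a t0 t1 : nat) : seq (bool * nat) :=
  match a, t0, t1 with
  | 0, 0, 0 => [:: (false, 1); (true, 2); (false, 0); (true, 1); (false, 2); (true, 0); (false, 0)]
  | 0, 0, 1 => [:: (false, 2); (true, 1); (false, 0)]
  | 0, 0, 2 => [:: (false, 1); (true, 2); (false, 0)]
  | 0, 1, 0 => [:: (false, 1)]
  | 0, 1, 1 => [:: (false, 2); (true, 1); (false, 1)]
  | 0, 1, 2 => [:: (false, 2); (true, 1); (false, 0); (true, 2); (false, 1)]
  | 0, 2, 0 => [:: (false, 2)]
  | 0, 2, 1 => [:: (false, 1); (true, 2); (false, 0); (true, 1); (false, 2)]
  | 0, 2, 2 => [:: (false, 1); (true, 2); (false, 2)]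
  | 1, 0, 0 => [:: (false, 2); (true, 0); (false, 0)]
  | 1, 0, 1 => [:: (false, 0)]
  | 1, 0, 2 => [:: (false, 2); (true, 0); (false, 1); (true, 2); (false, 0)]
  | 1, 1, 0 => [:: (false, 2); (true, 0); (false, 1)]
  | 1, 1, 1 => [:: (false, 0); (true, 2); (false, 1); (true, 0); (false, 2); (true, 1); (false, 1)]
  | 1, 1, 2 => [:: (false, 0); (true, 2); (false, 1)]
  | 1, 2, 0 => [:: (false, 0); (true, 2); (false, 1); (true, 0); (false, 2)]
  | 1, 2, 1 => [:: (false, 2)]
  | 1, 2, 2 => [:: (false, 0); (true, 2); (false, 2)]
  | 2, 0, 0 => [:: (false, 1); (true, 0); (false, 0)]
  | 2, 0, 1 => [:: (false, 1); (true, 0); (false, 2); (true, 1); (false, 0)]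
  | 2, 0, 2 => [:: (false, 0)]
  | 2, 1, 0 => [:: (false, 0); (true, 1); (false, 2); (true, 0); (false, 1)]
  | 2, 1, 1 => [:: (false, 0); (true, 1); (false, 1)]
  | 2, 1, 2 => [:: (false, 1)]
  | 2, 2, 0 => [:: (false, 1); (true, 0); (false, 2)]
  | 2, 2, 1 => [:: (false, 0); (true, 1); (false, 2)]
  | 2, 2, 2 => [:: (false, 0); (true, 1); (false, 2); (true, 0); (false, 1); (true, 2); (false, 2)]
  | _, _, _ => [::]
  end.
Definition sol (a t0 t1 : 'I_3) : seq (bool * 'I_3) :=
  map (fun m => (m.1, on m.2)) (soln a t0 t1).

Definition chk (a t0 t1 : 'I_3) := [&& odd (size (sol a t0 t1)), valid2 (a, a) None (sol a t0 t1) &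
      run2 (a, a) (sol a t0 t1) == (t0, t1)].
Lemma base_check_all : all (fun a => all (fun t0 => all (fun t1 => chk a t0 t1) allo) allo) allo.
Proof. by vm_compute. Qed.
Lemma base_check a t0 t1 : chk a t0 t1.
Proof.
have /allP /(_ a (allo_mem a)) /allP /(_ t0 (allo_mem t0)) /allP /(_ t1 (allo_mem t1)) := base_check_all.
done.
Qed.

Definition lastd n (l : option 'I_n) (s : seq ('I_n * 'I_3)) : option 'I_n :=
  last l [seq Some m.1 | m <- s].

Lemma valid_seq_cat n (s1 s2 : seq ('I_n * 'I_3)) (R : position n) l :
  valid_seq R l (s1 ++ s2) = valid_seq R l s1 && valid_seq (run_moves R s1) (lastd l s1) s2.
Proof.
elim: s1 R l => [|[d q] s1 IH] R l //=.
by rewrite IH !andbA.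
Qed.

Lemma run_moves_cat n (s1 s2 : seq ('I_n * 'I_3)) (R : position n) :
  run_moves R (s1 ++ s2) = run_moves (run_moves R s1) s2.
Proof. by rewrite /run_moves foldl_cat. Qed.

Lemma lastd_small n k (s : seq ('I_n * 'I_3)) (l : option 'I_n) :
  all (fun m : 'I_n * 'I_3 => m.1 < k) s -> lastd l s = l \/ exists d, lastd l s = Some d /\ d < k.
Proof.
elim: s l => [|[d q] s IH] l /=; first by left.
case/andP=> hd hs; rewrite /lastd /= -/(lastd (Some d) s).
case: (IH (Some d) hs) => [->|[e [-> he]]]; right; [by exists d | by exists e].
Qed.

Section Sim.
Variables (n : nat) (d0 d1 : 'I_n) (h0 : val d0 = 0) (h1 : val d1 = 1).

Definition emb (m : bool * 'I_3) : 'I_n * 'I_3 := (if m.1 then d1 else d0, m.2).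

Lemma d01 : d0 != d1.
Proof. by apply/eqP => /(congr1 val); rewrite h0 h1. Qed.

Lemma sim ms : forall (s : st2) lb (R : position n) l,
  R d0 = s.1 -> R d1 = s.2 -> valid2 s lb ms ->
  (match lb with None => forall d, l = Some d -> 2 <= d
               | Some b => l = Some (if b then d1 else d0) end) ->
  valid_seq R l (map emb ms) /\
  run_moves R (map emb ms) =
    [ffun e => if e == d0 then (run2 s ms).1 else if e == d1 then (run2 s ms).2 else R e].
Proof.
elim: ms => [|[b q] ms IH] s lb R l hR0 hR1 /=.
  move=> _ _; split => //; apply/ffunP => e; rewrite ffunE.
  by case: eqP => [->|_] //; case: eqP => [->|_].
case/and3P => hleg hlb hv hl.
have hdm : legal_move R (if b then d1 else d0) q.
  move: hleg; rewrite /legal2 /legal_move; case: (b) => /=.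
    case/and3P => h2 h12 h1q; rewrite hR1 h2 /=; apply/forallP => e; apply/implyP => he.
    have -> : e = d0 by apply: val_inj; rewrite h0; move: he; rewrite h1 ltnS leqn0 => /eqP.
    by rewrite hR0 h12 h1q.
  move=> h; rewrite hR0 h /=; apply/forallP => e; apply/implyP; by rewrite h0.
have hl' : l != Some (if b then d1 else d0).
  case: lb hlb hl => [b'|] hlb hl.
    rewrite hl; apply/eqP => -[]; move: hlb.
    by case: (b); case: (b') => //= _ E; have := d01; rewrite E eqxx.
  apply/eqP => E; have := hl _ E; case: (b) => /=; by rewrite ?h0 ?h1.
set R' := do_move R _ q.
have e0 : R' d0 = (step2 s b q).1.
  rewrite /R' /do_move ffunE; case: (b) => /=; last by rewrite eqxx.
  by rewrite (negbTE d01) hR0.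
have e1 : R' d1 = (step2 s b q).2.
  rewrite /R' /do_move ffunE; case: (b) => /=; first by rewrite eqxx.
  by rewrite eq_sym (negbTE d01) hR1.
have [hv' hr'] := IH (step2 s b q) (Some b) R' (Some (if b then d1 else d0)) e0 e1 hv erefl.
split; first by rewrite hdm hl' hv'.
rewrite /run_moves /= -/(run_moves R' _) hr' /run2 /=.
apply/ffunP => e; rewrite /R' /do_move !ffunE.
case: (e =P d0) => // /eqP ne0; case: (e =P d1) => // /eqP ne1.
by case: (b); rewrite /= ?(negbTE ne0) ?(negbTE ne1).
Qed.
End Sim.

Lemma third_all : all (fun a => all (fun b => has (fun c => (c != a) && (c != b)) allo) allo) allo.
Proof. by vm_compute. Qed.

Lemma third (a b : 'I_3) : exists c : 'I_3, c != a /\ c != b.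
Proof.
have /allP /(_ a (allo_mem a)) /allP /(_ b (allo_mem b)) /hasP [c _ /andP [h1 h2]] := third_all.
by exists c.
Qed.

Lemma Gk n j : j.+2 <= n -> forall (R : position n) (a : 'I_3),
  (forall d : 'I_n, d < j.+2 -> R d = a) -> forall T : position n,
  exists ms : seq ('I_n * 'I_3),
    [/\ odd (size ms), all (fun m : 'I_n * 'I_3 => m.1 < j.+2) ms,
        forall l : option 'I_n, (forall d, l = Some d -> j.+2 <= d) -> valid_seq R l ms
      & run_moves R ms = [ffun e : 'I_n => if e < j.+2 then T e else R e]].
Proof.
elim: j => [|j IH] hn R a hR T.
- have h0n : 0 < n by apply: leq_trans hn.
  have h1n : 1 < n by [].
  pose d0 := Ordinal h0n; pose d1 := Ordinal h1n.
  have /and3P [hodd hv /eqP hr] := base_check a (T d0) (T d1).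
  exists (map (emb d0 d1) (sol a (T d0) (T d1))).
  split.
  + by rewrite size_map.
  + by apply/allP => m /mapP [[b q] _ ->] /=; case: b.
  + move=> l hl; exact: (proj1 (sim (d0:=d0) (d1:=d1) erefl erefl (s:=(a,a)) (lb:=None) (l:=l) (hR d0 isT) (hR d1 isT) hv hl)).
  + have [_ ->] := sim (d0:=d0) (d1:=d1) erefl erefl (s:=(a,a)) (lb:=None) (R:=R) (l:=None) (hR d0 isT) (hR d1 isT) hv (fun d (E : None = Some d) => ltac:(discriminate)).
    rewrite hr /=; apply/ffunP => e; rewrite !ffunE.
    case: (e =P d0) => [->|ne0] //; case: (e =P d1) => [->|ne1] //.
    have -> : (e < 2) = false; last by [].
    apply/negbTE; rewrite -leqNgt; case: e ne0 ne1 => [[|[|m]] hm] ne0 ne1 //.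
    * by exfalso; apply: ne0; apply: val_inj.
    * by exfalso; apply: ne1; apply: val_inj.
have hn' : j.+2 <= n by apply: ltnW.
pose K := Ordinal hn.
have hRK : R K = a by apply: hR.
have hRs : forall d : 'I_n, d < j.+2 -> R d = a by move=> d hd; apply: hR; apply: ltnW.
case: (eqVneq (T K) a) => hTK.
  have [ms [hodd hall hv hr]] := IH hn' R a hRs T.
  exists ms; split => //.
  - by apply/allP => m /(allP hall) /ltnW.
  - by move=> l hl; apply: hv => d /hl /ltnW.
  rewrite hr; apply/ffunP => e; rewrite !ffunE.
  case: (ltngtP e j.+2) => he.
  + by rewrite ltnS (ltnW he).
  + by rewrite ltnNge he.
  + have -> : e = K by apply: val_inj.
    by rewrite ltnSn hTK hRK.
have [c [hca hcb]] := third a (T K).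
have [ms1 [hodd1 hall1 hv1 hr1]] := IH hn' R a hRs [ffun _ => c].
pose R1 := run_moves R ms1.
pose R2 := do_move R1 K (T K).
have hR2 : forall d : 'I_n, d < j.+2 -> R2 d = c.
  move=> d hd; rewrite /R2 /R1 hr1 /do_move !ffunE hd.
  suff -> : (d == K) = false by [].
  by apply/negbTE; apply/eqP => /(congr1 val) /= E; move: hd; rewrite E ltnn.
have [ms3 [hodd3 hall3 hv3 hr3]] := IH hn' R2 c hR2 T.
exists (ms1 ++ (K, T K) :: ms3); split.
- by rewrite size_cat /= oddD /= hodd1 hodd3.
- rewrite all_cat /=; apply/and3P; split => //.
  + by apply/allP => m /(allP hall1) /ltnW.
  + by apply/allP => m /(allP hall3) /ltnW.
- move=> l hl; rewrite valid_seq_cat (hv1 l (fun d E => ltnW (hl d E))) /=.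
  apply/and3P; split.
  + rewrite /legal_move; apply/andP; split.
      by rewrite -/R1 /R1 hr1 ffunE ltnn hRK eq_sym.
    apply/forallP => e; apply/implyP => he.
    rewrite -/R1 /R1 hr1 !ffunE ltnn hRK he.
    by rewrite hca hcb.
  + case: (lastd_small l hall1) => [->|[d [-> hd]]].
      apply/eqP => E; have := hl _ E; by rewrite /= ltnn.
    apply/eqP => -[E]; move: hd; by rewrite E ltnn.
  + apply: hv3 => d [<-] /=; exact: leqnn.
- rewrite run_moves_cat /run_moves /= -/(run_moves _ _) -/R1 -/R2 hr3.
  apply/ffunP => e; rewrite !ffunE.
  case: (ltngtP e j.+2) => he.
  + by rewrite ltnS (ltnW he).
  + rewrite ltnNge he /=.
    have -> : (e == K) = false.
      by apply/negbTE; apply/eqP => /(congr1 val) /= E; move: he; rewrite E ltnn.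
    by rewrite /R1 hr1 ffunE ltnNge (ltnW he).
  + have -> : e = K by apply: val_inj.
    by rewrite ltnSn eqxx.
Qed.

Theorem theorem1 (n : nat) (hn : 2 <= n) (P : position n) :
  exists ms : seq ('I_n * 'I_3),
    [/\ odd (size ms), valid_seq (init_pos n) None ms & run_moves (init_pos n) ms = P].
Proof.
have [j hj] : exists j, n = j.+2 by exists n.-2; case: n hn {P} => [|[|n]].
subst n.
have [ms [hodd _ hv hr]] := Gk (leqnn _) (R := init_pos j.+2) (a := ord0)
  (fun d _ => ffunE _ _) P.
exists ms; split => //.
  by apply: hv.
by rewrite hr; apply/ffunP => e; rewrite !ffunE ltn_ord.
Qed.
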